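(* For integers $r,r^{\star},n$ with $1\le r^{\star}\le r<n$, there exist $X,Z\in\mathbb{R}^{n\times r}$ with $\mathrm{rank}(Z)=r^{\star}$ and $XX^{T}\ne ZZ^{T}$ such that $\delta(X,Z)\le1/(1+1/\sqrt{r-r^{\star}+1})$.
   Context: A linear map $\mathcal{A}:\mathbb{R}^{n\times n}\to\mathbb{R}^{m}$ satisfies $(\delta,p)$-RIP if $0\le\delta<1$ and there is $\nu>0$ such that $(1-\delta)\|E\|_{F}^{2}\le\frac{1}{\nu}\|\mathcal{A}(E)\|^{2}\le(1+\delta)\|E\|_{F}^{2}$ for all $E\in\mathbb{R}^{n\times n}$ with $\mathrm{rank}(E)\le p$. For $X,Z\in\mathbb{R}^{n\times r}$ with $XX^{T}\ne ZZ^{T}$ and $r^{\star}=\mathrm{rank}(Z)$, the threshold RIP function $\delta(X,Z)$ is the infimum of all $\delta$ for which there exist $m\ge1$ and a linear map $\mathcal{A}:\mathbb{R}^{n\times n}\to\mathbb{R}^{m}$ satisfying $(\delta,r+r^{\star})$-RIP such that the function $f_{\mathcal{A}}(U)=\|\mathcal{A}(UU^{T}-ZZ^{T})\|^{2}$ on $\mathbb{R}^{n\times r}$ satisfies $\nabla f_{\mathcal{A}}(X)=0$ and $\nabla^{2}f_{\mathcal{A}}(X)\succeq0$. *)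

(* Defs.v *)
From HB Require Import structures.
From mathcomp Require Import all_boot all_order all_algebra.
From mathcomp Require Import all_classical all_reals all_analysis.
Set Implicit Arguments. Unset Strict Implicit. Unset Printing Implicit Defensive.
Import Order.TTheory GRing.Theory Num.Theory.
Local Open Scope ring_scope.
Local Open Scope classical_set_scope.

Definition frob2 {R : realType} {n : nat} (E : 'M[R]_n) : R :=
  \sum_(i < n) \sum_(j < n) E i j ^+ 2.

Definition vnorm2 {R : realType} {m : nat} (v : 'rV[R]_m) : R :=
  \sum_(k < m) v ord0 k ^+ 2.

Definition RIP {R : realType} {n m : nat}
    (A : {linear 'M[R]_n -> 'rV[R]_m}) (delta : R) (p : nat) : Prop :=
  0 <= delta /\ delta < 1 /\
  exists nu : R, 0 < nu /\
    forall E : 'M[R]_n, (\rank E <= p)%N ->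
      (1 - delta) * frob2 E <= vnorm2 (A E) / nu /\
      vnorm2 (A E) / nu <= (1 + delta) * frob2 E.

Definition fA {R : realType} {n r m : nat}
    (A : {linear 'M[R]_n -> 'rV[R]_m}) (Z U : 'M[R]_(n, r)) : R :=
  vnorm2 (A (U *m U^T - Z *m Z^T)).

(* First-order condition nabla f(X) = 0, written through directional
   derivatives: d/dt f(X + tV) at t = 0 vanishes for every direction V. *)
Definition grad_zero {R : realType} {n r : nat}
    (f : 'M[R]_(n, r) -> R) (X : 'M[R]_(n, r)) : Prop :=
  forall V : 'M[R]_(n, r), derive1 (fun t : R => f (X + t *: V)) 0 = 0.

(* Second-order condition nabla^2 f(X) >= 0 (positive semidefinite):
   the quadratic form V |-> d^2/dt^2 f(X + tV) at t = 0 is nonnegative. *)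
Definition hess_psd {R : realType} {n r : nat}
    (f : 'M[R]_(n, r) -> R) (X : 'M[R]_(n, r)) : Prop :=
  forall V : 'M[R]_(n, r),
    0 <= derive1 (derive1 (fun t : R => f (X + t *: V))) 0.

Definition threshold_set {R : realType} {n r : nat} (X Z : 'M[R]_(n, r)) : set R :=
  [set delta | exists (m : nat) (A : {linear 'M[R]_n -> 'rV[R]_m}),
      (1 <= m)%N /\ RIP A delta (r + \rank Z)%N /\
      grad_zero (fA A Z) X /\ hess_psd (fA A Z) X].

(* delta(X,Z): infimum taken in the extended reals (inf of empty set = +oo) *)
Definition threshold_RIP {R : realType} {n r : nat} (X Z : 'M[R]_(n, r)) : \bar R :=
  ereal_inf [set (d%:E)%E | d in threshold_set X Z].

(* Main.v *)
Require Import Defs.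
From HB Require Import structures.
From mathcomp Require Import all_boot all_order all_algebra.
From mathcomp Require Import all_classical all_reals all_analysis.
From mathcomp Require Import ring lra.
Set Implicit Arguments. Unset Strict Implicit. Unset Printing Implicit Defensive.
Import Order.TTheory GRing.Theory Num.Theory.
Local Open Scope ring_scope.

Section Gen.
Variable R : realType.

Lemma deriv_quad m (u v w : 'rV[R]_m) :
  let f := fun t : R => \sum_k (u 0 k + t * v 0 k + t ^+ 2 * w 0 k) ^+ 2 in
  derive1 f 0 = \sum_k 2 * u 0 k * v 0 k /\
  derive1 (derive1 f) 0 = \sum_k (2 * v 0 k ^+ 2 + 4 * u 0 k * w 0 k).
Proof.
move=> f.
pose p : {poly R} := \sum_k ((u 0 k ^+ 2)%:P + (2 * u 0 k * v 0 k) *: 'X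
   + (v 0 k ^+ 2 + 2 * u 0 k * w 0 k) *: 'X^2 + (2 * v 0 k * w 0 k) *: 'X^3
   + (w 0 k ^+ 2) *: 'X^4).
have fE : f = horner p.
  apply/funext => t; rewrite /f /p horner_sum; apply: eq_bigr => k _.
  rewrite !(hornerD, hornerZ, hornerC, hornerXn, hornerX); ring.
have d1 : derive1 f = horner p^`() by rewrite fE derivE.
have d2 : derive1 (derive1 f) = horner p^`()^`() by rewrite d1 (derivE p^`()).

have c1 : p`_1 = \sum_k 2 * u 0 k * v 0 k.
  rewrite /p coef_sum; apply: eq_bigr => k _.
  rewrite !coefD !coefZ !coefC !coefXn !coefX /=; ring.
have c2 : p`_2 = \sum_k (v 0 k ^+ 2 + 2 * u 0 k * w 0 k).
  rewrite /p coef_sum; apply: eq_bigr => k _.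
  rewrite !coefD !coefZ !coefC !coefXn !coefX /=; ring.
rewrite d2 d1 !horner_coef0 !coef_deriv /= c1 c2; split => //.
rewrite mulr1n -sumrMnl; apply: eq_bigr => k _; rewrite mulr2n; ring.
Qed.

Lemma sum_pick r' (m : nat) (G : 'I_r'.+1 -> R) :
  \sum_(c < r'.+1) (if (m == c)%N then G c else 0) =
  if (m < r'.+1)%N then G (inord m) else 0.
Proof.
case: ltnP => Hm.
  rewrite (bigD1 (inord m)) //= inordK // eqxx big1 ?addr0 // => c Hc.
  case: eqP => // Hmc; move: Hc; suff -> : c = inord m by rewrite eqxx.
  by apply: val_inj; rewrite /= inordK // Hmc.
rewrite big1 // => c _; case: eqP => // Hmc.
by move: (ltn_ord c); rewrite -Hmc ltnNge Hm.
Qed.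

Lemma count_range (N rs r : nat) (c : R) : (rs <= r < N)%N ->
  \sum_(i < N) (if (rs <= i <= r)%N then c else 0) = (r - rs).+1%:R * c.
Proof.
move=> /andP [H1 H2].
rewrite -(big_mkord xpredT (fun i => if (rs <= i <= r)%N then c else 0)).
rewrite (big_cat_nat (n := rs)) //=; last by apply: leq_trans (ltnW H2).
rewrite (big_cat_nat (m := rs) (n := r.+1)) //=; last by apply: ltnW.
rewrite big1_seq ?add0r; last first.
  by move=> i /andP [_]; rewrite mem_index_iota => /andP [_ Hi]; rewrite leqNgt Hi.
rewrite [X in _ + X]big1_seq ?addr0; last first.
  by move=> i /andP [_]; rewrite mem_index_iota => /andP [Hi _]; rewrite (leqNgt i r) Hi andbF.
rewrite big_nat_cond (eq_bigr (fun _ => c)); last first.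
  by move=> i /andP [/andP [Hi1 Hi2] _]; rewrite Hi1 -ltnS Hi2.
rewrite -big_nat_cond sumr_const_nat mulr_natl.
by rewrite subSn.
Qed.

Lemma sum_mxvec (p q : nat) (F : R -> R -> R) (M N : 'M[R]_(p, q)) :
  \sum_k F (mxvec M 0 k) (mxvec N 0 k) = \sum_i \sum_j F (M i j) (N i j).
Proof.
rewrite (reindex _ (curry_mxvec_bij _ _)) /= pair_bigA.
by apply: eq_bigr => [[i j]] _ /=; rewrite !mxvecE.
Qed.

Lemma expand p q (X V Z : 'M[R]_(p, q)) (t : R) :
  (X + t *: V) *m (X + t *: V)^T - Z *m Z^T =
  (X *m X^T - Z *m Z^T) + t *: (X *m V^T + V *m X^T) + t ^+ 2 *: (V *m V^T).
Proof.
rewrite linearD linearZ /= mulmxDl !mulmxDr -!scalemxAl -!scalemxAr !scalerA.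
move: (X *m X^T) (X *m V^T) (V *m X^T) (V *m V^T) (Z *m Z^T) => a b c d z.
rewrite scalerDr expr2 !addrA.
rewrite [LHS]addrAC; congr (_ + _); rewrite [LHS]addrAC; congr (_ + _); exact: addrAC.
Qed.

End Gen.

Section Constr.
Variables (R : realType) (n r' rs : nat).
Local Notation r := r'.+1.

Definition kk : nat := (r - rs).+1.
Definition sk : R := Num.sqrt (kk%:R).
Definition rho : R := Num.sqrt sk.
Definition tt : R := (1 + sk)^-1.
Definition aa : R := Num.sqrt tt.
Definition LL : R := 1 + 2 * sk.
Definition gad (i : nat) : bool := (rs <= i <= r)%N.
Definition wgt (i j : nat) : R := if (i == j) && (gad i || (i == 0)%N) then 1 else LL.

Definition Gm (E : 'M[R]_n.+1) : 'M[R]_(n.+1, n.+1 + 1) :=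
  row_mx (\matrix_(i, j) (Num.sqrt (wgt i j) * E i j))
         (\col_i (if gad i then rho * E i i + E 0 0 / rho else 0)).

Definition Aop (E : 'M[R]_n.+1) : 'rV[R]_(n.+1 * (n.+1 + 1)) := mxvec (Gm E).

Lemma Gm_lin (c : R) E F : Gm (c *: E + F) = c *: Gm E + Gm F.
Proof.
apply/matrixP => i j; rewrite /Gm !mxE.
case: splitP => [j' _|j' _]; rewrite ?mxE; first by ring.
by case: (gad i); [rewrite ?mxE; ring | ring].
Qed.

Lemma Aop_lin : linear Aop.
Proof. by move=> c E F; rewrite /Aop Gm_lin linearP. Qed.

HB.instance Definition _ := GRing.isLinear.Build R 'M[R]_n.+1 'rV[R]_(n.+1 * (n.+1 + 1)) _ Aop Aop_lin.




Hypothesis Hrs1 : (1 <= rs)%N.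
Hypothesis Hrsr : (rs <= r)%N.
Hypothesis Hrn : (r < n.+1)%N.

Lemma kk_ge1 : (1 <= kk)%N. Proof. by []. Qed.
Lemma sk_gt0 : 0 < sk. Proof. by rewrite sqrtr_gt0 ltr0n. Qed.
Lemma sk2 : sk ^+ 2 = kk%:R. Proof. by rewrite sqr_sqrtr // ler0n. Qed.
Lemma rho_gt0 : 0 < rho. Proof. by rewrite sqrtr_gt0 sk_gt0. Qed.
Lemma rho2 : rho ^+ 2 = sk. Proof. by rewrite sqr_sqrtr // ltW // sk_gt0. Qed.
Lemma tt_gt0 : 0 < tt. Proof. by rewrite invr_gt0; have := sk_gt0; lra. Qed.
Lemma tt_le1 : tt <= 1.
Proof. by rewrite invf_le1; have := sk_gt0; lra. Qed.
Lemma tt_eq : tt * (1 + sk) = 1.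
Proof. by rewrite mulVf //; have := sk_gt0; lra. Qed.
Lemma aa2 : aa ^+ 2 = tt. Proof. by rewrite sqr_sqrtr // ltW // tt_gt0. Qed.
Lemma wgt_ge1 i j : 1 <= wgt i j.
Proof. by rewrite /wgt; case: ifP => // _; rewrite /LL; have := sk_gt0; lra. Qed.
Lemma wgt_ge0 i j : 0 <= wgt i j.
Proof. by have := wgt_ge1 i j; lra. Qed.

Definition bil (E F : 'M[R]_n.+1) := \sum_k Aop E 0 k * Aop F 0 k.
Definition yv (E : 'M[R]_n.+1) (i : 'I_n.+1) := rho * E i i + E 0 0 / rho.

Lemma bilE E F : bil E F = \sum_(i < n.+1) \sum_(j < n.+1) wgt i j * E i j * F i j
   + \sum_(i < n.+1) (if gad i then yv E i * yv F i else 0).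
Proof.
rewrite /bil /Aop (sum_mxvec (fun a b => a * b) (Gm E) (Gm F)) -big_split /=.
apply: eq_bigr => i _.
rewrite big_split_ord /= big_ord1; congr (_ + _).
  apply: eq_bigr => j _; rewrite /Gm !row_mxEl !mxE.
  have := sqr_sqrtr (wgt_ge0 i j); rewrite expr2 => H.
  by rewrite -[in RHS]H; ring.
rewrite /Gm !row_mxEr !mxE /yv; case: (gad i) => //; ring.
Qed.


Definition xv (c : nat) : R := if (c.+1 < rs)%N then 1 else aa.
Definition Xm : 'M[R]_(n.+1, r) := \matrix_(i, c) (if (i == c.+1 :> nat) then xv c else 0).
Definition Zm : 'M[R]_(n.+1, r) := pid_mx rs.
Definition M0 := Xm *m Xm^T - Zm *m Zm^T.

Lemma xv2 c : xv c ^+ 2 = if (c.+1 < rs)%N then 1 else tt.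
Proof. by rewrite /xv; case: ifP => _; rewrite ?expr1n ?aa2. Qed.

Lemma XXE i j : (Xm *m Xm^T) i j =
  if ((0 < i <= r)%N && (i == j :> nat)) then xv i.-1 ^+ 2 else 0.
Proof.
rewrite mxE; case: i => [[|i'] Hi] /=.
  by rewrite big1 // => c _; rewrite !mxE /= mul0r.
transitivity (\sum_(c < r) (if (i' == c) then
   (if (j == i'.+1 :> nat) then xv c ^+ 2 else 0) else 0)).
  apply: eq_bigr => c _; rewrite !mxE /= eqSS.
  case: (i' =P c) => [Hc|_]; last by rewrite mul0r.
  by rewrite -Hc; case: eqP => _; rewrite ?mulr0 ?expr2.
rewrite (sum_pick i' (fun c : 'I_r => if (j == i'.+1 :> nat) then xv c ^+ 2 else 0)).
by case: ifP => H //=; rewrite inordK // eq_sym.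
Qed.

Lemma subE p q (A B : 'M[R]_(p, q)) i j : (A - B) i j = A i j - B i j.
Proof. by rewrite !mxE. Qed.

Lemma M0E i j : M0 i j = if (i == j :> nat) then
   (if (i == 0 :> nat) then -1 else if gad i then tt else 0) else 0.
Proof.
rewrite /M0 subE XXE /Zm tr_pid_mx mul_pid_mx minnn.
rewrite (minn_idPr Hrsr) mxE xv2 /gad.
case: (i =P j :> nat) => [Hij|Hij]; last by rewrite andbF subr0.
rewrite andbT /=.
case: (nat_of_ord i) => [|i'] /=; first by rewrite Hrs1 sub0r.
case: (leqP i'.+1 r) => Hir /=.
  case: (ltnP i'.+1 rs) => Hirs /=; first by rewrite subrr.
  by rewrite subr0.
case: (ltnP i'.+1 rs) => Hirs /=.
  by exfalso; move: (leq_trans Hirs Hrsr); rewrite leqNgt ltnW.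
by rewrite subr0.
Qed.


Lemma gad0 : gad 0 = false.
Proof. by rewrite /gad leqNgt Hrs1. Qed.

Lemma count_gad (c : R) : \sum_(i < n.+1) (if gad i then c else 0) = kk%:R * c.
Proof. by rewrite /gad count_range // Hrsr Hrn. Qed.

Lemma sum_first (c : R) : \sum_(i < n.+1) (if (i == 0 :> nat) then c else 0) = c.
Proof. by rewrite big_ord_recl /= big1 ?addr0 // => i _. Qed.

Lemma kkE : kk%:R = rho ^+ 4 :> R.
Proof. by rewrite -sk2 -rho2 -exprM. Qed.

Lemma ttE : tt = (1 + rho ^+ 2)^-1.
Proof. by rewrite rho2. Qed.

Lemma bilM0 F : bil M0 F = - (LL * tt) * F 0 0.
Proof.
rewrite bilE.
under eq_bigr => i _.
  rewrite (bigD1 i) //= big1 => [|j Hj]; last first.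
    by rewrite M0E; case: eqP => [/val_inj Hij|]; [rewrite Hij eqxx in Hj | rewrite mulr0 mul0r].
  rewrite addr0 M0E eqxx.
  over.
under [X in _ + X]eq_bigr => i _.
  rewrite /yv !M0E !eqxx /=.
  over.
have gadi : forall i : 'I_n.+1, gad i -> (i == 0 :> nat) = false.
  by move=> i; case: eqP => // ->; rewrite gad0.
set S := \sum_(i < n.+1) (if gad i then F i i else 0).
transitivity (- F 0 0 + tt * S + (rho * tt - 1 / rho) * (rho * S + kk%:R * (F 0 0 / rho))).
  congr (_ + _).
    rewrite /S mulr_sumr -(sum_first (- F 0 0)) -big_split /=; apply: eq_bigr => i _.
    case Hi: (gad i); first by rewrite gadi //= /wgt Hi eqxx /=; ring.
    have [->|Hi0] := eqVneq i ord0; first by rewrite /= /wgt /= gad0 /=; ring.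
    have -> : (i == 0 :> nat) = false by apply: contraNF Hi0 => /eqP H; apply/eqP/val_inj.
    by ring.
  set c := rho * tt - 1 / rho.
  transitivity (\sum_(i < n.+1) ((if gad i then c * rho * F i i else 0) +
      (if gad i then c * (F 0 0 / rho) else 0))).
    apply: eq_bigr => i _; case Hi: (gad i); last by rewrite addr0.
    by rewrite gadi // /c; ring.
  rewrite big_split /= count_gad /S.
  have -> : \sum_(i < n.+1) (if gad i then c * rho * F i i else 0) =
     \sum_(i < n.+1) (c * rho) * (if gad i then F i i else 0).
    by apply: eq_bigr => i _; case: (gad i); ring.
  by rewrite -(big_distrr (c * rho)) /=; ring.
rewrite /LL kkE ttE -rho2; field.
have := rho_gt0; move=> h; apply/andP; split; last by rewrite gt_eqF.
have : 0 < 1 + rho ^+ 2 by rewrite ltr_pwDl // exprn_ge0 // ltW.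
by move=> h2; rewrite gt_eqF.
Qed.


Lemma vnorm2_bil E : vnorm2 (Aop E) = bil E E.
Proof. by rewrite /vnorm2 /bil; apply: eq_bigr => k _; rewrite expr2. Qed.

Lemma q_lower E : frob2 E <= bil E E.
Proof.
rewrite bilE -[frob2 E]addr0; apply: lerD.
  apply: ler_sum => i _; apply: ler_sum => j _.
  rewrite -mulrA -expr2 -{1}[E i j ^+ 2]mul1r; apply: ler_wpM2r.
    exact: sqr_ge0.
  exact: wgt_ge1.
by apply: sumr_ge0 => i _; case: (gad i) => //; rewrite -expr2 sqr_ge0.
Qed.

Lemma row_eq E (i : 'I_n.+1) : \sum_(j < n.+1) wgt i j * E i j * E i j =
  LL * \sum_(j < n.+1) E i j ^+ 2 -
  (if (i == 0 :> nat) || gad i then 2 * sk * E i i ^+ 2 else 0).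
Proof.
rewrite (bigD1 i) //= [in RHS](bigD1 i) //= mulrDr.
have -> : \sum_(j < n.+1 | j != i) wgt i j * E i j * E i j =
          LL * \sum_(j < n.+1 | j != i) E i j ^+ 2.
  rewrite mulr_sumr; apply: eq_bigr => j Hj.
  have Hij : (i == j :> nat) = false by rewrite eq_sym in Hj; apply: negbTE Hj.
  by rewrite /wgt Hij /=; ring.
rewrite /wgt eqxx /= orbC; case: (_ || _); rewrite /LL; ring.
Qed.

Lemma q_upper E : bil E E <= LL * frob2 E.
Proof.
rewrite -subr_ge0.
have -> : LL * frob2 E - bil E E =
   \sum_(i < n.+1) (if gad i then (rho * E i i - E 0 0 / rho) ^+ 2 else 0).
  rewrite bilE /frob2 mulr_sumr.
  rewrite (eq_bigr _ (fun (i : 'I_n.+1) (_ : true) => row_eq E i)) sumrB.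
  have -> : forall A B C : R, A - (A - B + C) = B - C by move=> *; ring.
  have gadi : forall i : 'I_n.+1, gad i -> (i == 0 :> nat) = false.
    by move=> i; case: eqP => // ->; rewrite gad0.
  transitivity (\sum_(i < n.+1) (if (i == 0 :> nat) then 2 * sk * E 0 0 ^+ 2 else 0)
     + \sum_(i < n.+1) (if gad i then 2 * sk * E i i ^+ 2 - yv E i * yv E i else 0)).
    rewrite [X in _ = _ + X](eq_bigr (fun i : 'I_n.+1 =>
        (if gad i then 2 * sk * E i i ^+ 2 else 0) - (if gad i then yv E i * yv E i else 0))); last first.
      by move=> i _; case: (gad i); rewrite ?subr0.
    rewrite sumrB addrA; congr (_ - _); rewrite -big_split /=; apply: eq_bigr => i _.
    case Hi: (gad i); first by rewrite gadi //= add0r.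
    rewrite orbF addr0; have [->|Hi0] := eqVneq i ord0; first by [].
    have -> : (i == 0 :> nat) = false by apply: contraNF Hi0 => /eqP H; apply/eqP/val_inj.
    by [].
  rewrite sum_first.
  rewrite (eq_bigr (fun i : 'I_n.+1 =>
        (if gad i then (rho * E i i - E 0 0 / rho) ^+ 2 else 0) +
        (if gad i then - (2 * E 0 0 ^+ 2 / rho ^+ 2) else 0))); last first.
    move=> i _; case: (gad i); last by rewrite addr0.
    rewrite /yv -rho2; field.
    by rewrite gt_eqF // rho_gt0.
  rewrite big_split /= count_gad kkE -rho2; field.
  by rewrite gt_eqF // rho_gt0.
by apply: sumr_ge0 => i _; case: (gad i) => //; rewrite sqr_ge0.
Qed.


Lemma Xm0 c : Xm 0 c = 0.
Proof. by rewrite mxE. Qed.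
Lemma addE p q (A B : 'M[R]_(p, q)) i j : (A + B) i j = A i j + B i j.
Proof. by rewrite !mxE. Qed.
Lemma mulE p q s (A : 'M[R]_(p, q)) (B : 'M[R]_(q, s)) i j :
  (A *m B) i j = \sum_k A i k * B k j.
Proof. by rewrite !mxE. Qed.
Lemma trE p q (A : 'M[R]_(p, q)) i j : A^T i j = A j i.
Proof. by rewrite !mxE. Qed.
Lemma XmE i c : Xm i c = if (i == c.+1 :> nat) then xv c else 0.
Proof. by rewrite mxE. Qed.

Lemma D00 (V : 'M[R]_(n.+1, r)) : (Xm *m V^T + V *m Xm^T) 0 0 = 0.
Proof.
rewrite addE !mulE !big1 ?addr0 // => c _; rewrite !trE Xm0; ring.
Qed.

Lemma dsym (V : 'M[R]_(n.+1, r)) i j :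
  (Xm *m V^T + V *m Xm^T) i j = (Xm *m V^T + V *m Xm^T) j i.
Proof.
rewrite !addE !mulE addrC; congr (_ + _); apply: eq_bigr => c _; rewrite !trE; ring.
Qed.

Lemma D0lift (V : 'M[R]_(n.+1, r)) (j : 'I_n) :
  (Xm *m V^T + V *m Xm^T) 0 (lift ord0 j) =
  if (j < r)%N then V 0 (inord j) * xv j else 0.
Proof.
rewrite addE !mulE big1 ?add0r => [|c _]; last by rewrite Xm0 mul0r.
transitivity (\sum_(c < r) (if (j == c :> nat) then V 0 c * xv c else 0)).
  apply: eq_bigr => c _; rewrite !trE XmE /= /bump /= add1n eqSS.
  by case: eqP => _; rewrite ?mulr0.
by rewrite (sum_pick j (fun c : 'I_r => V 0 c * xv c)); case: ifP => // H; rewrite inordK.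
Qed.

Lemma hess_lb (V : 'M[R]_(n.+1, r)) :
  2 * LL * tt * (V *m V^T) 0 0 <= bil (Xm *m V^T + V *m Xm^T) (Xm *m V^T + V *m Xm^T).
Proof.
set D := Xm *m V^T + V *m Xm^T.
have Hrn' : (r <= n)%N by [].
have step1 : 2 * LL * \sum_(c < r) (V 0 c * xv c) ^+ 2 <=
             \sum_(i < n.+1) \sum_(j < n.+1) wgt i j * D i j * D i j.
  have -> : \sum_(c < r) (V 0 c * xv c) ^+ 2 =
            \sum_(j < n) D 0 (lift ord0 j) ^+ 2.
    rewrite (eq_bigr (fun j : 'I_n => if (j < r)%N then (V 0 (inord j) * xv j) ^+ 2 else 0));
      last by move=> j _; rewrite D0lift; case: ifP; rewrite ?expr0n.
    rewrite -big_mkcond /= (big_ord_narrow Hrn'); apply: eq_bigr => c _.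
    by rewrite /= inord_val.
  rewrite big_ord_recl [X in _ <= X + _]big_ord_recl.
  have Tge0 : forall i j : 'I_n.+1, 0 <= wgt i j * D i j * D i j.
    by move=> i j; rewrite -mulrA mulr_ge0 ?wgt_ge0 // -expr2 sqr_ge0.
  have h1 : forall j : 'I_n, wgt 0 (lift ord0 j) = LL.
    by move=> j; rewrite /wgt.
  have h2 : forall j : 'I_n, wgt (lift ord0 j) 0 = LL.
    by move=> j; rewrite /wgt.
  rewrite -addrA -[X in X <= _]add0r; apply: lerD; first exact: Tge0.
  rewrite mulr_sumr -big_split; apply: ler_sum => j _.
  rewrite (bigD1 ord0) //= -[X in X <= _]addr0.
  have -> : 2 * LL * D 0 (lift ord0 j) ^+ 2 =
     wgt 0 (lift ord0 j) * D ord0 (lift ord0 j) * D ord0 (lift ord0 j) +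
     wgt (lift ord0 j) 0 * D (lift ord0 j) ord0 * D (lift ord0 j) ord0.
    by rewrite h1 h2 [D (lift _ _) ord0]dsym; ring.
  rewrite addrA; apply: lerD => //; apply: sumr_ge0 => i _; exact: (Tge0 (lift ord0 j) i).
rewrite bilE; apply: le_trans (lerD step1 (_ : 0 <= _)); last first.
  by apply: sumr_ge0 => i _; case: (gad i) => //; rewrite -expr2 sqr_ge0.
rewrite addr0 -mulrA ler_wpM2l //; first by rewrite mulr_ge0 // /LL; have := sk_gt0; lra.
rewrite mulE mulr_sumr; apply: ler_sum => c _; rewrite trE exprMn xv2 mulrC.
case: ifP => _; rewrite -expr2 //.
by rewrite ler_wpM2l ?sqr_ge0 // tt_le1.
Qed.


End Constr.


Unset Implicit Arguments.

Theorem proposition8 (R : realType) (n r rs : nat) :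
  (1 <= rs)%N -> (rs <= r)%N -> (r < n)%N ->
  exists X Z : 'M[R]_(n, r),
    \rank Z = rs /\ X *m X^T != Z *m Z^T /\
    (threshold_RIP X Z <= (1 / (1 + 1 / Num.sqrt ((r - rs).+1)%:R))%:E)%E.
Proof.
move=> H1 H2 H3.
case: n H3 => [//|n] H3.
case: r H2 H3 => [|r'] H2 H3; first by move: (leq_trans H1 H2).
exists (@Xm R n r' rs), (@Zm R n r' rs).
split; first by rewrite /Zm rank_pid_mx // (leq_trans H2 (ltnW H3)).
split.
  apply/eqP => H; have := congr1 (fun M : 'M[R]_n.+1 => M 0 0) H.
  rewrite XXE /Zm tr_pid_mx mul_pid_mx minnn (minn_idPr H2) mxE /= H1.
  by move/eqP; rewrite eq_sym oner_eq0.
apply: ereal_inf_lbound; exists (1 / (1 + 1 / @sk R r' rs)) => //.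
exists (n.+1 * (n.+1 + 1))%N, (@Aop R n r' rs); split; first by rewrite muln_gt0.
have skp := sk_gt0 R r' rs.
have i1 : 0 < 1 / @sk R r' rs by rewrite divr_gt0.
have i2 : 0 < 1 + 1 / @sk R r' rs by rewrite addr_gt0.
split.
  split; first by rewrite divr_ge0 // ltW.
  split.
    by rewrite ltr_pdivrMr // mul1r mul1r ltrDl invr_gt0.
  exists (1 + @sk R r' rs); split; first by rewrite addr_gt0.
  move=> E _; rewrite vnorm2_bil.
  have Hd : 1 / (1 + 1 / @sk R r' rs) = @sk R r' rs / (1 + @sk R r' rs).
    by field; apply/andP; split; rewrite gt_eqF // addr_gt0.
  rewrite Hd.
  have Hlo := @q_lower R n r' rs E.
  have Hup := @q_upper R n r' rs H1 H2 H3 E.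
  have hp : 0 < 1 + @sk R r' rs by rewrite addr_gt0.
  split.
    rewrite ler_pdivlMr //.
    have -> : (1 - @sk R r' rs / (1 + @sk R r' rs)) * frob2 E * (1 + @sk R r' rs) = frob2 E.
      by field; rewrite gt_eqF.
    exact: Hlo.
  rewrite ler_pdivrMr //.
  have -> : (1 + @sk R r' rs / (1 + @sk R r' rs)) * frob2 E * (1 + @sk R r' rs) = @LL R r' rs * frob2 E.
    by rewrite /LL; field; rewrite gt_eqF.
  exact: Hup.
have fE : forall V : 'M[R]_(n.+1, r'.+1),
  (fun t : R => fA (@Aop R n r' rs) (@Zm R n r' rs) (@Xm R n r' rs + t *: V)) =
  (fun t : R => \sum_k (@Aop R n r' rs (@M0 R n r' rs) 0 k
        + t * @Aop R n r' rs (@Xm R n r' rs *m V^T + V *m (@Xm R n r' rs)^T) 0 k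
        + t ^+ 2 * @Aop R n r' rs (V *m V^T) 0 k) ^+ 2).
  move=> V; apply/funext => t; rewrite /fA expand /vnorm2 /M0.
  apply: eq_bigr => k _; rewrite !linearD !linearZ /= !mxE.
  by rewrite mulrDr.
split.
  move=> V; rewrite fE; have [-> _] := deriv_quad
    (@Aop R n r' rs (@M0 R n r' rs))
    (@Aop R n r' rs (@Xm R n r' rs *m V^T + V *m (@Xm R n r' rs)^T))
    (@Aop R n r' rs (V *m V^T)).
  have -> : \sum_k 2 * @Aop R n r' rs (@M0 R n r' rs) 0 k *
      @Aop R n r' rs (@Xm R n r' rs *m V^T + V *m (@Xm R n r' rs)^T) 0 k =
      2 * @bil R n r' rs (@M0 R n r' rs) (@Xm R n r' rs *m V^T + V *m (@Xm R n r' rs)^T).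
    by rewrite /bil mulr_sumr; apply: eq_bigr => k _; ring.
  by rewrite (@bilM0 R n r' rs H1 H2 H3) D00 !mulr0.
move=> V; rewrite fE; have [_ ->] := deriv_quad
    (@Aop R n r' rs (@M0 R n r' rs))
    (@Aop R n r' rs (@Xm R n r' rs *m V^T + V *m (@Xm R n r' rs)^T))
    (@Aop R n r' rs (V *m V^T)).
have -> : \sum_k (2 * @Aop R n r' rs (@Xm R n r' rs *m V^T + V *m (@Xm R n r' rs)^T) 0 k ^+ 2 +
      4 * @Aop R n r' rs (@M0 R n r' rs) 0 k * @Aop R n r' rs (V *m V^T) 0 k) =
    2 * @bil R n r' rs (@Xm R n r' rs *m V^T + V *m (@Xm R n r' rs)^T) (@Xm R n r' rs *m V^T + V *m (@Xm R n r' rs)^T)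
    + 4 * @bil R n r' rs (@M0 R n r' rs) (V *m V^T).
  rewrite /bil !mulr_sumr -big_split /=; apply: eq_bigr => k _; ring.
rewrite (@bilM0 R n r' rs H1 H2 H3).
have := @hess_lb R n r' rs H3 V.
set P := (V *m V^T) 0 0; set Q := bil _ _.
move=> h; have tt0 := tt_gt0 R r' rs.
nra.
Qed.
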